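(* Let $a_0,a_1,a_2,b_0,b_1,b_2$ be real numbers and let $(T(n,k))_{n\ge 0,\,k\in\mathbb{Z}}$ be defined by $T(0,0)=1$, $T(n,k)=0$ whenever $k<0$ or $k>n$, and \[ T(n,k)=(a_0+a_1k+a_2n)\,T(n-1,k)+(b_0+b_1k+b_2n)\,T(n-1,k-1)\qquad(n\ge1). \] Then for all integers $0\le k\le n$, \[ T(n,k)=\sum_{1\le p_1<\cdots<p_{n-k}\le n}\ \prod_{i=1}^{n-k}\big((a_2+a_1)p_i-a_1i+a_0\big)\ \prod_{i=1}^{k}\Big(b_0+(b_1+b_2)i+b_2\sum_{j=0}^{i-1}\#\{l: p_l-l=j\}\Big). \]
   Context: The outer sum runs over strictly increasing sequences of $n-k$ integers in $\{1,\dots,n\}$; $\#$ denotes cardinality; empty products equal $1$. *)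

(* Defs.v *)
From HB Require Import structures.
From mathcomp Require Import all_boot all_order all_algebra.
From mathcomp Require Import reals.
Set Implicit Arguments. Unset Strict Implicit. Unset Printing Implicit Defensive.
Import Order.TTheory GRing.Theory Num.Theory.
Local Open Scope ring_scope.

(* Values at k < 0 are 0: this is
   realised by the "if k is k'.+1 ... else 0" branch.  Values at k > n are 0
   automatically (proved trivially by induction), matching T(n,k)=0 for k>n. *)
Fixpoint Ttri (R : pzRingType) (a0 a1 a2 b0 b1 b2 : R) (n k : nat) : R :=
  match n with
  | 0%N => if k == 0%N then 1 else 0
  | m.+1 =>
      (a0 + a1 * k%:R + a2 * n%:R) * Ttri a0 a1 a2 b0 b1 b2 m k
      + (if k is k'.+1 then (b0 + b1 * k%:R + b2 * n%:R) * Ttri a0 a1 a2 b0 b1 b2 m k'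
         else 0)
  end.

(* For a tuple t : m.-tuple 'I_n encoding p_1 < ... < p_m in {1..n},
   p_(i+1) = val (tnth t i) + 1 (0-based index i). *)
Definition pseq n m (t : m.-tuple 'I_n) (i : 'I_m) : nat := (val (tnth t i)).+1.

Definition cnt n m (t : m.-tuple 'I_n) (j : nat) : nat :=
  #|[set l : 'I_m | (pseq t l - l.+1)%N == j]|.

(* Main.v *)
Require Import Defs.
From HB Require Import structures.
From mathcomp Require Import all_boot all_order all_algebra.
From mathcomp Require Import reals.
From mathcomp Require Import zify ring.
Import Order.TTheory GRing.Theory Num.Theory.
Set Implicit Arguments. Unset Strict Implicit. Unset Printing Implicit Defensive.
Fixpoint subs (n m : nat) : seq (seq nat) :=
  match n with
  | 0 => if m == 0 then [:: [::]] else [::]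
  | n'.+1 => subs n' m ++ (if m is m'.+1 then map (rcons^~ n') (subs n' m') else [::])
  end.

Lemma subs_props n m s : s \in subs n m ->
  [/\ sorted ltn s, size s = m & all (gtn n) s].
Proof.
elim: n m s => [|n IH] m s /=.
  by case: m => //=; rewrite inE => /eqP ->.
rewrite mem_cat => /orP [/IH [h1 h2 h3]|].
  split=> //; apply/allP=> x /(allP h3) /=; lia.
case: m => // m /mapP [s' /IH [h1 h2 h3] ->].
rewrite size_rcons h2 all_rcons /= ltnSn; split=> //.
  rewrite sorted_pairwise; last exact: ltn_trans.
  rewrite -cats1 pairwise_cat /= andbT -sorted_pairwise; last exact: ltn_trans.
  rewrite h1 andbT allrel1r; exact: h3.
apply/allP=> x /(allP h3) /=; lia.
Qed.

Lemma subs_complete n s : sorted ltn s -> all (gtn n) s -> s \in subs n (size s).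
Proof.
elim: n s => [|n IH] s.
  by case: s.
case/lastP: s => [|s x] hs ha.
  by rewrite /= mem_cat; apply/orP; left; apply: (IH [::]).
move: hs; rewrite sorted_pairwise; last exact: ltn_trans.
rewrite -cats1 pairwise_cat /= andbT allrel1r => /andP [hx hs].
rewrite -sorted_pairwise in hs; last exact: ltn_trans.
move: ha; rewrite cats1 all_rcons /= => /andP [xn ha].
rewrite /= mem_cat size_rcons; apply/orP.
have [e|ne] := eqVneq x n.
  right; apply/mapP; exists s; last by rewrite e.
  by apply: IH => //; apply/allP => y /(allP hx) /=; lia.
left; rewrite -(size_rcons s x); apply: IH.
  rewrite sorted_pairwise; last exact: ltn_trans.
  by rewrite -cats1 pairwise_cat /= andbT allrel1r hx -sorted_pairwise //; exact: ltn_trans.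
rewrite all_rcons /=; apply/andP; split; first lia.
by apply/allP => y /(allP hx) /=; lia.
Qed.

Lemma subs_uniq n m : uniq (subs n m).
Proof.
elim: n m => [|n IH] m /=; first by case: (m == 0).
case: m => [|m]; first by rewrite cats0.
rewrite cat_uniq IH /= map_inj_uniq ?IH ?andbT; last exact: rcons_injl.
apply/hasPn => s /mapP [s' _ ->]; apply/negP => /subs_props [_ _].
by rewrite all_rcons /= ltnn.
Qed.

Lemma subs_bound n m s : s \in subs n m -> forall l, l < m -> nth 0 s l + (m - l) <= n.
Proof.
elim: n m s => [|n IH] m s /=.
  by case: m.
rewrite mem_cat => /orP [/IH h l lm|].
  by have := h l lm; lia.
case: m => // m /mapP [s' hs ->] l lm.
have := subs_props hs => [[_ sz _]].
rewrite nth_rcons sz.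
case: ltngtP => hl.
- have := IH _ _ hs l hl; lia.
- lia.
- subst; lia.
Qed.

Lemma subs_0 n : subs n 0 = [:: [::]].
Proof. by elim: n => //= n ->. Qed.

Lemma subs_big n m : n < m -> subs n m = [::].
Proof.
elim: n m => [|n IH] [|m] //= h.
by rewrite IH ?IH //; lia.
Qed.

Lemma sum_eq_lt x K : \sum_(0 <= j < K) (x == j : nat) = (x < K : nat).
Proof.
elim: K => [|K IH]; first by rewrite big_geq.
rewrite big_nat_recr //= IH.
case: (ltngtP x K) => h.
- by rewrite (ltn_trans h (ltnSn K)).
- by rewrite ltnS leqNgt h.
- by subst; rewrite ltnSn.
Qed.

Local Open Scope ring_scope.

Section Main.
Variables (R : realType) (a0 a1 a2 b0 b1 b2 : R).

Definition cntS m (s : seq nat) j : nat := (\sum_(l < m) ((nth 0 s l - l)%N == j : nat))%N.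

Definition G m k (s : seq nat) : R :=
  (\prod_(i < m) ((a2 + a1) * (nth 0 s i).+1%:R - a1 * (i.+1)%:R + a0))
  * \prod_(1 <= i < k.+1) (b0 + (b1 + b2) * i%:R + b2 * (\sum_(0 <= j < i) (cntS m s j)%:R)).

Lemma cnt_sum m s K : (forall l, (l < m)%N -> (nth 0 s l - l < K)%N) ->
  (\sum_(0 <= j < K) cntS m s j)%N = m.
Proof.
move=> h; rewrite /cntS exchange_big /=.
rewrite (eq_bigr (fun _ => 1%N)) ?sum1_card ?card_ord // => l _.
by rewrite sum_eq_lt h.
Qed.

Lemma Tzero n k : (n < k)%N -> Ttri a0 a1 a2 b0 b1 b2 n k = 0.
Proof.
elim: n k => [|n IH] [|k] //= h.
rewrite !IH; [by rewrite !mulr0 addr0 | lia | lia].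
Qed.


Lemma Gsnoc n m k s : s \in subs n m -> (m + k = n)%N ->
  G m k.+1 s = G m k s * (b0 + b1 * k.+1%:R + b2 * n.+1%:R).
Proof.
move=> hs e; rewrite /G -mulrA; congr (_ * _).
rewrite big_nat_recr //=; congr (_ * _).
rewrite -natr_sum cnt_sum; last first.
  move=> l hl; have := subs_bound hs hl; lia.
rewrite -e; ring.
Qed.

Lemma Grcons n m k s : s \in subs n m -> (m + k = n)%N ->
  G m.+1 k (rcons s n) = G m k s * (a0 + a1 * k%:R + a2 * n.+1%:R).
Proof.
move=> hs e; have [_ sz _] := subs_props hs.
rewrite /G big_ord_recr /= nth_rcons sz ltnn eqxx.
have -> : \prod_(i < m) ((a2 + a1) * (nth 0 (rcons s n) (widen_ord (leqnSn m) i)).+1%:R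
     - a1 * i.+1%:R + a0)
   = \prod_(i < m) ((a2 + a1) * (nth 0 s i).+1%:R - a1 * i.+1%:R + a0).
  by apply: eq_bigr => i _; rewrite /= nth_rcons sz ltn_ord.
have -> : \prod_(1 <= i < k.+1) (b0 + (b1 + b2) * i%:R
      + b2 * (\sum_(0 <= j < i) (cntS m.+1 (rcons s n) j)%:R))
   = \prod_(1 <= i < k.+1) (b0 + (b1 + b2) * i%:R
      + b2 * (\sum_(0 <= j < i) (cntS m s j)%:R)).
  apply: eq_big_nat => i /andP [_ hi]; congr (_ + _ * _).
  apply: eq_big_nat => j /andP [_ hj]; f_equal.
  rewrite /cntS big_ord_recr /= nth_rcons sz ltnn eqxx.
  have -> : ((n - m)%N == j) = false by apply/negbTE; lia.
  rewrite addn0; apply: eq_bigr => l _; by rewrite /= nth_rcons sz ltn_ord.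
rewrite -e; set A := \prod_(i < m) _; set B := \prod_(_ <= i < _) _.
ring.
Qed.

Lemma key n k : (k <= n)%N ->
  Ttri a0 a1 a2 b0 b1 b2 n k = \sum_(s <- subs n (n - k)) G (n - k) k s.
Proof.
elim: n k => [|n IH] k hk.
  move: hk; rewrite leqn0 => /eqP -> /=.
  by rewrite big_seq1 /G big_ord0 big_geq // mulr1.
have [ek|hk'] := eqVneq k n.+1.
  subst k; rewrite subnn subs_0 big_seq1 /= Tzero // mulr0 add0r IH // subnn subs_0 big_seq1.
  rewrite (Gsnoc (n := n)) ?subs_0 ?inE // mulrC.
  by [].
have kn : (k <= n)%N by lia.
rewrite subSn // /= big_cat big_map /=.
case: k hk hk' kn => [|k] hk hk' kn.
  rewrite subs_big ?subn0; last lia.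
  rewrite big_nil ?addr0 add0r IH // subn0 big_distrr /=.
  apply: eq_big_seq => s hs; by rewrite (Grcons hs) ?addn0 // mulrC.
rewrite IH // IH; last lia.
have -> : (n - k.+1).+1 = (n - k)%N by lia.
rewrite !big_distrr /= [RHS]addrC; congr (_ + _).
  apply: eq_big_seq => s hs.
  have -> : (n - k)%N = (n - k.+1).+1 by lia.
  rewrite (Grcons hs); last lia.
  by rewrite mulrC.
apply: eq_big_seq => s hs; rewrite (Gsnoc hs); last lia.
by rewrite mulrC.
Qed.

End Main.

Lemma val_tnth n m (t : m.-tuple 'I_n) (i : 'I_m) : val (tnth t i) = nth 0%N (map val t) i.
Proof. by rewrite -tnth_map (tnth_nth 0%N). Qed.

Lemma reindex n m : perm_eq
  (map (fun t : m.-tuple 'I_n => map val (tval t))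
     (filter (fun t : m.-tuple 'I_n => sorted ltn (map val t)) (index_enum {: m.-tuple 'I_n})))
  (subs n m).
Proof.
apply: uniq_perm.
- rewrite map_inj_uniq ?filter_uniq ?index_enum_uniq //.
  by move=> t1 t2 /(inj_map val_inj) /val_inj.
- exact: subs_uniq.
move=> s; apply/idP/idP.
  case/mapP => t; rewrite mem_filter => /andP [hP _] ->.
  have := subs_complete hP (n := n).
  rewrite size_map size_tuple; apply.
  by apply/allP => x /mapP [y _ ->]; exact: ltn_ord.
move=> hs; have [h1 h2 h3] := subs_props hs.
have hsz : size (pmap insub s : seq 'I_n) == m.
  by rewrite size_pmap_sub -h2 -all_count.
have hv : map val (pmap insub s : seq 'I_n) = s.
  clear hs h1 h2 hsz; elim: s h3 => //= x s IH /andP [hx ha].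
  by rewrite insubT /= IH.
apply/mapP; exists (Tuple hsz) => /=; last by rewrite hv.
by rewrite mem_filter hv h1 mem_index_enum.
Qed.

Theorem mainTheorem5 (R : realType) (a0 a1 a2 b0 b1 b2 : R) (n k : nat) :
  (k <= n)%N ->
  Ttri a0 a1 a2 b0 b1 b2 n k =
  \sum_(t : (n - k).-tuple 'I_n | sorted ltn (map val t))
     ((\prod_(i < n - k) ((a2 + a1) * (pseq t i)%:R - a1 * (i.+1)%:R + a0))
      * \prod_(1 <= i < k.+1)
          (b0 + (b1 + b2) * i%:R + b2 * (\sum_(0 <= j < i) (cnt t j)%:R))).
Proof.
move=> hk; rewrite (key a0 a1 a2 b0 b1 b2 hk).
rewrite (eq_bigr (fun t => G a0 a1 a2 b0 b1 b2 (n - k) k (map val (tval t)))); last first.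
  move=> t _; rewrite /G; congr (_ * _).
    by apply: eq_bigr => i _; rewrite /pseq val_tnth.
  apply: eq_big_nat => i _; congr (_ + _ * _); apply: eq_big_nat => j _; f_equal.
  rewrite /cnt /cntS -sum1dep_card big_mkcond /=; apply: eq_bigr => l _.
  by rewrite /pseq val_tnth subSS; case: (_ == _).
rewrite -big_filter -(big_map (fun t : (n - k).-tuple 'I_n => map val (tval t)) xpredT).
apply/esym/perm_big; exact: reindex.
Qed.
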